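(* Let $G$ be a finite simple graph on $[d]$, let $k\ge1$, let $<$ be a monomial order on $R[G]$, and let $\{m_1,\dots,m_s\}$ be the set of all standard monomials of degree $k$ with respect to the initial ideal ${\rm in}_<(K_G)$. Each such $m_i$ is of the form $x_{S_1}\cdots x_{S_k}$ with $S_1,\dots,S_k$ pairwise disjoint stable sets, and hence equals ${\bf x}_{f_i}$ for the $k$-coloring $f_i$ of $G[S_1\cup\dots\cup S_k]$ given by $f_i(v)=\ell$ for $v\in S_\ell$. Then the set of those $f_i$ that are $k$-colorings of $G$ itself (i.e. with $S_1\cup\dots\cup S_k=[d]$) is a complete representative system for the set ${\rm kc}(G,k)$ of $k$-Kempe classes of $G$.
   Context: A $k$-coloring of a graph $H$ is a map $f:V(H)\to[k]$ (not necessarily surjective) with $f(u)\neq f(v)$ for every edge $\{u,v\}$. A Kempe switching of a $k$-coloring $f$: choose colors $i<j$ and a connected component $C$ of $H[f^{-1}(i)\cup f^{-1}(j)]$, and interchange $i$ and $j$ on $C$. Two $k$-colorings are Kempe equivalent ($\sim_k$) if one is obtained from the other by a finite sequence of Kempe switchings; ${\rm kc}(H,k)$ is the set of equivalence classes (the $k$-Kempe classes) of the set of $k$-colorings of $H$. Colorings differing only by a permutation of the colors are identified. A stable set of $G$ is a subset of $[d]$ containing no edge (including $\emptyset$ and singletons); $S(G)$ is the set of stable sets; $R[G]=\mathbb{K}[x_S:S\in S(G)]$ over a field $\mathbb{K}$, all variables of degree $1$. For a $k$-coloring $f$ of an induced subgraph $G[W]$, ${\bf x}_f=\prod_{\ell=1}^k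 x_{f^{-1}(\ell)}$. $J_G$ is the ideal generated by all ${\bf x}_f-{\bf x}_g$ with $f,g$ $2$-colorings of a common induced subgraph of $G$; $M_G=\langle x_Sx_T : S,T\in S(G),\ S\cap T\neq\emptyset\rangle$; the Kempe ideal is $K_G=J_G+M_G$. For a monomial order $<$, ${\rm in}_<(I)$ is the ideal generated by the leading monomials of nonzero elements of $I$, and a monomial is standard if it does not lie in ${\rm in}_<(I)$. *)

(* Defs.v *)
From HB Require Import structures.
From mathcomp Require Import all_boot all_order all_algebra.
From mathcomp Require Import mpoly.
From Stdlib Require Relations.Relation_Definitions Relations.Relation_Operators.

Set Implicit Arguments.
Unset Strict Implicit.
Unset Printing Implicit Defensive.

Import GRing.Theory.
Local Open Scope ring_scope.

Section Defs.
Variables (d : nat) (e : rel 'I_d).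

Definition stable (S : {set 'I_d}) : bool :=
  [forall u in S, forall v in S, ~~ e u v].

(* the finite type S(G) of stable sets, indexing the variables of R[G] *)
Definition stT := {S : {set 'I_d} | stable S}.

Definition nst : nat := #|{: stT}|.

(* W-proper_col coloring: f is a coloring of the induced subgraph G[W] *)
Definition proper_col (k : nat) (W : {set 'I_d}) (f : {ffun 'I_d -> 'I_k}) : Prop :=
  forall u v, u \in W -> v \in W -> e u v -> f u != f v.

Variable K : fieldType.

(* the variable x_S of R[G] = K[x_S : S in S(G)] (0 if S is not stable) *)
Definition xS (S : {set 'I_d}) : {mpoly K[nst]} :=
  match @insub _ (stable) stT S with
  | Some s => 'X_(enum_rank s)
  | None => 0
  end.

Definition xf (k : nat) (W : {set 'I_d}) (f : {ffun 'I_d -> 'I_k}) : {mpoly K[nst]} :=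
  \prod_(l < k) xS [set v in W | f v == l].

Definition Jgen (p : {mpoly K[nst]}) : Prop :=
  exists (W : {set 'I_d}) (f g : {ffun 'I_d -> 'I_2}),
    proper_col W f /\ proper_col W g /\ p = xf W f - xf W g.

Definition Mgen (p : {mpoly K[nst]}) : Prop :=
  exists S T : {set 'I_d},
    stable S /\ stable T /\ S :&: T != set0 /\ p = xS S * xS T.

End Defs.

Definition ideal_gen (n : nat) (K : fieldType) (A : {mpoly K[n]} -> Prop)
    (p : {mpoly K[n]}) : Prop :=
  exists s : seq ({mpoly K[n]} * {mpoly K[n]}),
    (forall x, x \in s -> A x.1) /\ p = \sum_(x <- s) x.1 * x.2.

Definition Kempe_ideal (d : nat) (e : rel 'I_d) (K : fieldType) : {mpoly K[nst e]} -> Prop :=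
  ideal_gen (fun p => @Jgen d e K p \/ @Mgen d e K p).

Definition monomial_order (n : nat) (lt : rel 'X_{1..n}) : Prop :=
  [/\ irreflexive lt,
      transitive lt,
      (forall m m', m != m' -> lt m m' || lt m' m),
      (forall m m' p, lt m m' -> lt (m + p)%MM (m' + p)%MM)
    & well_founded (fun a b => lt a b)].

Definition is_lead (n : nat) (K : fieldType) (lt : rel 'X_{1..n}) (p : {mpoly K[n]})
    (m : 'X_{1..n}) : Prop :=
  m \in msupp p /\ (forall m', m' \in msupp p -> m' != m -> lt m' m).

Definition initial_ideal (n : nat) (K : fieldType) (lt : rel 'X_{1..n})
    (I : {mpoly K[n]} -> Prop) : {mpoly K[n]} -> Prop :=
  @ideal_gen n K (fun q => exists (p : {mpoly K[n]}) (m : 'X_{1..n}),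
                 I p /\ p != 0 /\ @is_lead n K lt p m /\ q = 'X_[m]).

Definition std_monomial (n : nat) (K : fieldType) (lt : rel 'X_{1..n})
    (I : {mpoly K[n]} -> Prop) (k : nat) (m : 'X_{1..n}) : Prop :=
  mdeg m = k /\ ~ @initial_ideal n K lt I 'X_[m].

Definition kswitch (d : nat) (e : rel 'I_d) (k : nat) (f : {ffun 'I_d -> 'I_k})
    (i j : 'I_k) (v : 'I_d) : {ffun 'I_d -> 'I_k} :=
  [ffun u => if connect (fun a b => [&& e a b, (f a == i) || (f a == j)
                                      & (f b == i) || (f b == j)]) v u
             then (if f u == i then j else if f u == j then i else f u)
             else f u].

Definition kstep (d : nat) (e : rel 'I_d) (k : nat) (f g : {ffun 'I_d -> 'I_k}) : Prop :=
  exists (i j : 'I_k) (v : 'I_d), g = kswitch e f i j v.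

Definition kempe_equiv (d : nat) (e : rel 'I_d) (k : nat) : Relation_Definitions.relation {ffun 'I_d -> 'I_k} :=
  @Relation_Operators.clos_refl_trans _ (@kstep d e k).

Arguments Kempe_ideal {d} e K _.

(* Main.v *)
Require Import Defs.
From HB Require Import structures.
From mathcomp Require Import all_boot all_order all_algebra.
From mathcomp Require Import mpoly.
From Stdlib Require Import ClassicalEpsilon.
From Stdlib Require Relations.Relation_Operators.
Import Relation_Operators.

Set Implicit Arguments.
Unset Strict Implicit.
Unset Printing Implicit Defensive.


Section Comb.
Variables (d k : nat) (e : rel 'I_d).
Hypothesis e_sym : forall u v, e u v = e v u.

Definition kproper (f : {ffun 'I_d -> 'I_k}) := forall u v, e u v -> f u != f v.

Definition sw (i j x : 'I_k) := if x == i then j else if x == j then i else x.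

Lemma sw_in i j x : ((sw i j x == i) || (sw i j x == j)) = ((x == i) || (x == j)).
Proof.
rewrite /sw; case: (eqVneq x i) => [E|xi]; rewrite ?E; first by rewrite eqxx orbT.
case: (eqVneq x j) => [E|xj]; rewrite ?E; first by rewrite eqxx.
by rewrite (negbTE xi) (negbTE xj).
Qed.

Lemma sw_out i j x : ~~ ((x == i) || (x == j)) -> sw i j x = x.
Proof. by rewrite /sw negb_or => /andP[/negbTE -> /negbTE ->]. Qed.

Lemma swK i j : involutive (sw i j).
Proof.
move=> x; rewrite /sw; case: (eqVneq x i) => [E|xi]; rewrite ?E.
  by case: (eqVneq j i) => [E2|ji]; rewrite ?E2; rewrite ?eqxx.
case: (eqVneq x j) => [E|xj]; rewrite ?E; first by rewrite eqxx.
by rewrite (negbTE xi) (negbTE xj).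
Qed.

Lemma sw_ne i j x : i != j -> (x == i) || (x == j) -> x != sw i j x.
Proof.
move=> ij /orP[/eqP->|/eqP->]; rewrite /sw eqxx //.
by move: ij; rewrite eq_sym => ij; rewrite (negbTE ij).
Qed.

Lemma two_el (i j x y z : 'I_k) : i != j ->
  (x == i) || (x == j) -> (y == i) || (y == j) -> (z == i) || (z == j) ->
  x != y -> x != z -> y = z.
Proof.
move=> ij /orP[/eqP->|/eqP->] /orP[/eqP->|/eqP->] /orP[/eqP->|/eqP->] //;
  rewrite ?eqxx //.
Qed.

Definition Rk (f : {ffun 'I_d -> 'I_k}) (i j : 'I_k) :=
  fun a b => [&& e a b, (f a == i) || (f a == j) & (f b == i) || (f b == j)].

Lemma kswitchE (f : {ffun 'I_d -> 'I_k}) (i j : 'I_k) v u : kswitch e f i j v u =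
  if connect (Rk f i j) v u then sw i j (f u) else f u.
Proof. by rewrite /kswitch ffunE. Qed.

Lemma kswitch_proper (f : {ffun 'I_d -> 'I_k}) (i j : 'I_k) v : kproper f -> kproper (kswitch e f i j v).
Proof.
move=> pf.
have H1 : forall a b, e a b -> connect (Rk f i j) v a -> ~~ connect (Rk f i j) v b ->
   sw i j (f a) != f b.
  move=> a b eab Ca nCb.
  case: (boolP ((f a == i) || (f a == j))) => ina.
    case: (boolP ((f b == i) || (f b == j))) => inb.
      have : connect (Rk f i j) v b.
        apply: connect_trans Ca (connect1 _); by rewrite /Rk eab ina inb.
      by rewrite (negbTE nCb).
    apply: contraNneq inb => <-; by rewrite sw_in.
  by rewrite sw_out //; apply: pf.
move=> a b eab; rewrite !kswitchE.
case: (boolP (connect _ v a)) => Ca; case: (boolP (connect _ v b)) => Cb.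
- by rewrite (inj_eq (can_inj (swK i j))); apply: pf.
- exact: H1.
- rewrite eq_sym; apply: H1 => //; by rewrite e_sym.
- exact: pf.
Qed.

Definition rec2 (f g : {ffun 'I_d -> 'I_k}) (i j : 'I_k) :=
  [/\ i != j, forall u, ((f u == i) || (f u == j)) = ((g u == i) || (g u == j))
    & forall u, ~~ ((f u == i) || (f u == j)) -> g u = f u].

Lemma kswitch_rec2 (f : {ffun 'I_d -> 'I_k}) (i j : 'I_k) v : i != j -> rec2 f (kswitch e f i j v) i j.
Proof.
move=> ij; split => // u; rewrite kswitchE; case: ifP => // _.
  by rewrite sw_in.
by move=> H; rewrite sw_out.
Qed.

Lemma kswitch_id (f : {ffun 'I_d -> 'I_k}) (i : 'I_k) v : kswitch e f i i v = f.
Proof.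
apply/ffunP => u; rewrite kswitchE /sw; case: ifP => // _.
by case: eqP.
Qed.

Lemma connect_inv (T : finType) (r : rel T) (P : pred T) :
  (forall a b, r a b -> P a -> P b) -> forall a b, connect r a b -> P a -> P b.
Proof.
move=> H a b /connectP [p]; elim: p a => [|x p IHp] a /=; first by move=> _ ->.
by case/andP=> rax pth lst Pa; exact: IHp x pth lst (H _ _ rax Pa).
Qed.

Lemma rec2_trans (f g h : {ffun 'I_d -> 'I_k}) i j : rec2 f g i j -> rec2 f h i j -> rec2 h g i j.
Proof.
case=> ij Hg1 Hg2 [_ Hh1 Hh2]; split => // u; first by rewrite -Hh1 Hg1.
rewrite -Hh1 => nu; by rewrite Hg2 // Hh2.
Qed.

Lemma rec2_kempe g i j : kproper g -> forall f, kproper f -> rec2 f g i j ->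
  kempe_equiv e f g.
Proof.
move=> pg.
suff: forall N (f : {ffun 'I_d -> 'I_k}), #|[pred u | f u != g u]| <= N -> kproper f -> rec2 f g i j ->
  kempe_equiv e f g by move=> H f; apply: H (leqnn _).
elim=> [|N IH] f.
  rewrite leqn0 => /eqP/card0_eq H _ _.
  have -> : f = g by apply/ffunP => u; apply/eqP; have := H u; rewrite !inE /= => /negbFE.
  exact: rt_refl.
move=> hN pf r2; case: (pickP [pred u | f u != g u]) => [v /= fv|none]; last first.
  have -> : f = g by apply/ffunP => u; apply/eqP; have := none u; rewrite /= => /negbFE.
  exact: rt_refl.
case: (r2) => ij H1 H2.
have vin : (f v == i) || (f v == j).
  apply: contraR fv => nv; by rewrite H2.
set h := kswitch e f i j v.
have Dcl : forall u, connect (Rk f i j) v u -> ((f u == i) || (f u == j)) && (f u != g u).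
  move=> u C; apply: (@connect_inv _ (Rk f i j)
     (fun u => ((f u == i) || (f u == j)) && (f u != g u)) _ v u C); last by rewrite vin fv.
  move=> a b /and3P[eab ina inb] /andP[_ ne]; rewrite inb /=.
  have gab : g a != g b by apply: pg.
  have fab : f a != f b by apply: pf.
  have gina : (g a == i) || (g a == j) by rewrite -H1.
  have ginb : (g b == i) || (g b == j) by rewrite -H1.
  have fbga : f b = g a by apply: (two_el ij ina).
  by rewrite fbga.
have hE : forall u, h u != g u -> h u = f u /\ f u != g u.
  move=> u; rewrite /h kswitchE; case: ifP => [C|]; last by [].
  have /andP[inu ne] := Dcl u C.
  have ginu : (g u == i) || (g u == j) by rewrite -H1.
  suff -> : sw i j (f u) = g u by rewrite eqxx.
  apply: (two_el ij inu); rewrite ?sw_in // ?sw_ne //.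
apply: (rt_trans _ _ _ h); first by apply: rt_step; exists i, j, v.
apply: IH.
- rewrite -ltnS; apply: leq_trans hN; apply: proper_card; apply/properP; split.
    by apply/subsetP => u; rewrite !inE /= => /hE [].
  exists v; first by rewrite inE.
  rewrite inE /= /h kswitchE connect0 negbK.
  have /andP[inu ne] := Dcl v (connect0 _ _).
  have ginu : (g v == i) || (g v == j) by rewrite -H1.
  apply/eqP; apply: (two_el ij inu); rewrite ?sw_in // ?sw_ne //.
- exact: kswitch_proper.
- exact: rec2_trans r2 (kswitch_rec2 _ _ ij).
Qed.

End Comb.

Import GRing.Theory.
Local Open Scope ring_scope.


Section Ideal.
Variables (n : nat) (R : fieldType) (A : {mpoly R[n]} -> Prop).
Local Notation I := (ideal_gen A).

Lemma I0 : I 0.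
Proof. by exists [::]; rewrite big_nil. Qed.

Lemma ID p q : I p -> I q -> I (p + q).
Proof.
move=> [s1 [H1 ->]] [s2 [H2 ->]]; exists (s1 ++ s2); split; last by rewrite big_cat.
by move=> x; rewrite mem_cat => /orP[/H1|/H2].
Qed.

Lemma IMl q p : I p -> I (q * p).
Proof.
move=> [s [H ->]]; exists [seq (x.1, q * x.2) | x <- s]; split.
  by move=> x /mapP [y ys ->] /=; apply: H.
by rewrite big_map mulr_sumr; apply: eq_bigr => x _ /=; rewrite mulrCA.
Qed.

Lemma IN p : I p -> I (- p).
Proof. by move=> Hp; rewrite -mulN1r; apply: IMl. Qed.

Lemma IB p q : I p -> I q -> I (p - q).
Proof. by move=> Hp Hq; apply: ID => //; apply: IN. Qed.

Lemma Igen p : A p -> I p.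
Proof.
move=> Ap; exists [:: (p, 1)]; split; last by rewrite big_seq1 mulr1.
by move=> x; rewrite inE => /eqP -> /=.
Qed.

End Ideal.

Section Poly.
Variables (K : fieldType) (d k : nat) (e : rel 'I_d).
Hypothesis e_sym : forall u v, e u v = e v u.
Local Notation n := (nst e).
Local Notation I := (Kempe_ideal e K).

Lemma stable0 : stable e set0.
Proof. by apply/forall_inP => u; rewrite inE. Qed.

Definition s0 : stT e := exist _ set0 stable0.

Definition rk (S : {set 'I_d}) : 'I_n := enum_rank (insubd s0 S).

Lemma xS_r S : stable e S -> xS e K S = 'X_(rk S).
Proof.
move=> sS; rewrite /xS /rk; case: insubP => [s _ <-|/negP //].
by rewrite valKd.
Qed.

Lemma rk_inj S T : stable e S -> stable e T -> rk S = rk T -> S = T.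
Proof.
move=> sS sT /enum_rank_inj/(congr1 val); by rewrite !val_insubd sS sT.
Qed.

Definition cls (f : {ffun 'I_d -> 'I_k}) (l : 'I_k) := [set u | f u == l].

Definition mon (f : {ffun 'I_d -> 'I_k}) : 'X_{1..n} :=
  (\sum_(l < k) U_(rk (cls f l)))%MM.

Lemma stable_cls f l : kproper e f -> stable e (cls f l).
Proof.
move=> pf; apply/forall_inP => u; rewrite inE => /eqP fu; apply/forall_inP => v.
rewrite inE => /eqP fv; apply/negP => /pf; by rewrite fu fv eqxx.
Qed.

Lemma xf_mon f : kproper e f -> xf e K setT f = 'X_[mon f].
Proof.
move=> pf; rewrite /xf /mon -mprodXE; apply: eq_bigr => l _.
have -> : [set v in setT | f v == l] = cls f l by apply/setP => u; rewrite !inE.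
by rewrite xS_r // stable_cls.
Qed.

Lemma mdeg_mon f : mdeg (mon f) = k.
Proof.
rewrite /mon mdeg_sum; under eq_bigr do rewrite mdeg1.
by rewrite sum_nat_const card_ord muln1.
Qed.

Definition rest (f : {ffun 'I_d -> 'I_k}) (i j : 'I_k) : 'X_{1..n} :=
  (\sum_(l < k | (l != i) && (l != j)) U_(rk (cls f l)))%MM.

Lemma mon_split f i j : i != j ->
  mon f = (U_(rk (cls f i)) + U_(rk (cls f j)) + rest f i j)%MM.
Proof.
move=> ij; rewrite /mon (bigD1 i) //= (bigD1 j) /=; last by rewrite eq_sym.
by rewrite addmA.
Qed.

Lemma rec2_cls f g i j l : rec2 f g i j -> l != i -> l != j -> cls g l = cls f l.
Proof.
case=> ij H1 H2 li lj; apply/setP => u; rewrite !inE.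
case: (boolP ((f u == i) || (f u == j))) => H; last by rewrite H2.
have := H; rewrite H1 => H'.
move: H H' => /orP[/eqP->|/eqP->] /orP[/eqP->|/eqP->];
  by rewrite ?(eq_sym i) ?(eq_sym j) ?(negbTE li) ?(negbTE lj).
Qed.

Lemma rest_rec2 f g i j : rec2 f g i j -> rest g i j = rest f i j.
Proof.
move=> r2; apply: eq_bigr => l /andP[li lj]; by rewrite (rec2_cls r2).
Qed.


Definition col2 (W : {set 'I_d}) (f2 : {ffun 'I_d -> 'I_2}) (c : 'I_2) :=
  [set v in W | f2 v == c].

Lemma stable_col2 W f2 c : proper_col e W f2 -> stable e (col2 W f2 c).
Proof.
move=> pf; apply/forall_inP => u; rewrite inE => /andP[uW /eqP fu]; apply/forall_inP => v.
rewrite inE => /andP[vW /eqP fv]; apply/negP => /(pf _ _ uW vW); by rewrite fu fv eqxx.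
Qed.

Lemma xf2 W f2 : proper_col e W f2 ->
  xf e K W f2 = 'X_[U_(rk (col2 W f2 ord0)) + U_(rk (col2 W f2 ord_max))].
Proof.
move=> pf; rewrite /xf big_ord_recl big_ord1 mpolyXD.
by rewrite !xS_r ?stable_col2.
Qed.

Definition Wf (f : {ffun 'I_d -> 'I_k}) i j := [set u | (f u == i) || (f u == j)].
Definition f2of (f : {ffun 'I_d -> 'I_k}) i : {ffun 'I_d -> 'I_2} :=
  [ffun u => if f u == i then ord0 else ord_max].

Lemma two_col f i j : i != j -> kproper e f ->
  [/\ proper_col e (Wf f i j) (f2of f i),
      col2 (Wf f i j) (f2of f i) ord0 = cls f i &
      col2 (Wf f i j) (f2of f i) ord_max = cls f j].
Proof.
move=> ij pf; split.
- move=> u v; rewrite !inE !ffunE => Hu Hv /pf fuv.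
  have ji : j != i by rewrite eq_sym.
  move: Hu Hv fuv => /orP[/eqP->|/eqP->] /orP[/eqP->|/eqP->];
    by rewrite ?eqxx ?(negbTE ij) ?(negbTE ji).
- apply/setP => u; rewrite !inE ffunE; case: eqP => //=; by rewrite andbF.
- apply/setP => u; rewrite !inE ffunE; case: (eqVneq (f u) i) => [E|fi] /=.
    by rewrite E eq_sym (negbTE ij).
  by rewrite andbT.
Qed.

Lemma rec2_I f g i j : rec2 f g i j -> kproper e f -> kproper e g ->
  I ('X_[mon f] - 'X_[mon g]).
Proof.
move=> r2 pf pg; case: (r2) => ij H1 H2.
have [pf2 f0 f1] := two_col ij pf.
have [pg2 g0 g1] := two_col ij pg.
have WE : Wf g i j = Wf f i j by apply/setP => u; rewrite !inE H1.
rewrite WE in pg2 g0 g1.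
rewrite (mon_split f ij) (mon_split g ij) (rest_rec2 r2).
rewrite ![(_ + rest f i j)%MM]addmC !mpolyXD -mulrBr; apply: IMl; apply: Igen; left.
exists (Wf f i j), (f2of f i), (f2of g i); split => //; split => //.
by rewrite !xf2 // f0 f1 g0 g1 -!mpolyXD.
Qed.


Lemma kempe_I f f' : kempe_equiv e f f' -> kproper e f ->
  kproper e f' /\ I ('X_[mon f] - 'X_[mon f']).
Proof.
elim=> {f f'} [f g [i [j [v ->]]]|f|f g h _ IH1 _ IH2] pf.
- case: (eqVneq i j) => [<-|ij].
    by rewrite kswitch_id subrr; split => //; apply: I0.
  have pg := kswitch_proper e_sym i j v pf.
  split => //; apply: rec2_I => //; exact: kswitch_rec2.
- by rewrite subrr; split => //; apply: I0.
- have [pg Ig] := IH1 pf; have [ph Ih] := IH2 pg; split => //.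
  by rewrite -(subrKA ('X_[mon g])); apply: ID.
Qed.

End Poly.

Section Mset.
Variables (n k : nat).

Lemma mset (t : 'I_k -> 'I_n) a b mu :
  (U_(a) + U_(b) + mu = \sum_(l < k) U_(t l))%MM ->
  exists l1 l2, [/\ l1 != l2, t l1 = a, t l2 = b &
    mu = (\sum_(l < k | (l != l1) && (l != l2)) U_(t l))%MM].
Proof.
have ex : forall (P : pred 'I_k) c, (0 < (\sum_(l < k | P l) U_(t l))%MM c)%N ->
    exists2 l, P l & t l = c.
  move=> P c; rewrite mnm_sumE.
  case: (pickP (fun l => P l && (t l == c))) => [l /andP[Pl /eqP tl] _| none].
    by exists l.
  rewrite big1 // => l Pl; rewrite mnm1E; have := none l; by rewrite Pl /= => ->.
move=> E.
have [l1 _ t1] : exists2 l1, true & t l1 = a.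
  by apply: (ex (fun _ => true)); rewrite -E !mnmDE mnm1E eqxx.
rewrite (bigD1 l1) //= t1 -addmA in E; move/addmI: E => E.
have [l2 l21 t2] : exists2 l2, l2 != l1 & t l2 = b.
  by apply: (ex (fun l => l != l1)); rewrite -E !mnmDE mnm1E eqxx.
rewrite (bigD1 l2) //= t2 in E; move/addmI: E => E.
by exists l1, l2; split => //; rewrite eq_sym.
Qed.

End Mset.


Definition pb (P : Prop) : bool := if excluded_middle_informative P then true else false.
Lemma pbP (P : Prop) : pb P <-> P.
Proof. by rewrite /pb; case: excluded_middle_informative. Qed.

Lemma I2 (x : 'I_2) : x = ord0 \/ x = ord_max.
Proof. by case: x => [[|[|]]] // H; [left|right]; apply: val_inj. Qed.

Section Phi.
Variables (K : fieldType) (d k : nat) (e : rel 'I_d).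
Hypothesis e_sym : forall u v, e u v = e v u.
Local Notation n := (nst e).
Local Notation I := (Kempe_ideal e K).
Variable g : {ffun 'I_d -> 'I_k}.

Definition good f' := kproper e f' /\ kempe_equiv e g f'.
Definition Gs := undup [seq mon e f' | f' <- [seq x <- enum {ffun 'I_d -> 'I_k} | pb (good x)]].

Lemma uniq_Gs : uniq Gs. Proof. exact: undup_uniq. Qed.

Lemma memGs m : m \in Gs <-> exists2 f', good f' & m = mon e f'.
Proof.
rewrite mem_undup; split.
  by case/mapP => f'; rewrite mem_filter => /andP[/pbP H _] ->; exists f'.
case=> f' H ->; apply: map_f; rewrite mem_filter mem_enum andbT; exact/pbP.
Qed.

Definition phi (p : {mpoly K[n]}) := \sum_(m <- Gs) p@_m.

Lemma phiX m : phi 'X_[m] = (m \in Gs)%:R.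
Proof.
rewrite /phi; under eq_bigr do rewrite mcoeffX.
case: (boolP (m \in Gs)) => H.
  rewrite (bigD1_seq m) //= ?uniq_Gs // eqxx big1 ?addr0 // => x.
  by rewrite eq_sym => /negbTE ->.
rewrite big1_seq // => x /andP[_ xin]; case: eqP => // E.
by rewrite E xin in H.
Qed.

Lemma phiB p q : phi (p - q) = phi p - phi q.
Proof. by rewrite /phi -sumrB; apply: eq_bigr => m _; rewrite mcoeffB. Qed.

Lemma phiZ c p : phi (c *: p) = c * phi p.
Proof. by rewrite /phi mulr_sumr; apply: eq_bigr => m _; rewrite mcoeffZ. Qed.

Lemma phi_sum (T : Type) (s : seq T) (F : T -> {mpoly K[n]}) :
  phi (\sum_(x <- s) F x) = \sum_(x <- s) phi (F x).
Proof.
rewrite /phi exchange_big /=; apply: eq_bigr => m _.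
by rewrite raddf_sum.
Qed.

Lemma swapG W f2 g2 mu : proper_col e W f2 -> proper_col e W g2 ->
  (U_(rk e (col2 W f2 ord0)) + U_(rk e (col2 W f2 ord_max)) + mu)%MM \in Gs ->
  (U_(rk e (col2 W g2 ord0)) + U_(rk e (col2 W g2 ord_max)) + mu)%MM \in Gs.
Proof.
move=> pf pg /memGs [f' [pf' gf'] E].
rewrite /mon in E; have [l1 [l2 [l12 t1 t2 mu_E]]] := mset E.
have c1 : cls f' l1 = col2 W f2 ord0 := rk_inj (stable_cls _ pf') (stable_col2 _ pf) t1.
have c2 : cls f' l2 = col2 W f2 ord_max := rk_inj (stable_cls _ pf') (stable_col2 _ pf) t2.
have inW : forall u, (u \in W) = ((f' u == l1) || (f' u == l2)).
  move=> u; apply/idP/idP.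
    move=> uW; case: (I2 (f2 u)) => fu.
      have : u \in col2 W f2 ord0 by rewrite inE uW fu eqxx.
      by rewrite -c1 inE => ->.
    have : u \in col2 W f2 ord_max by rewrite inE uW fu eqxx.
    by rewrite -c2 inE => ->; rewrite orbT.
  case/orP => H.
    have : u \in cls f' l1 by rewrite inE.
    by rewrite c1 inE => /andP[].
  have : u \in cls f' l2 by rewrite inE.
  by rewrite c2 inE => /andP[].
set g' := [ffun u => if u \in W then (if g2 u == ord0 then l1 else l2) else f' u].
have l21 : l2 != l1 by rewrite eq_sym.
have g'in : forall u, u \in W -> (g' u == l1) || (g' u == l2).
  by move=> u uW; rewrite ffunE uW; case: ifP; rewrite eqxx ?orbT.
have g'out : forall u, u \notin W -> g' u = f' u.
  by move=> u /negbTE uW; rewrite ffunE uW.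
have pg' : kproper e g'.
  have mixed : forall u v, u \in W -> v \notin W -> g' u != g' v.
    move=> u v uW vW; rewrite (g'out _ vW); apply/eqP => E'.
    by move: vW; rewrite inW -E' g'in.
  move=> u v euv; case: (boolP (u \in W)) => uW; case: (boolP (v \in W)) => vW.
  - have := pg u v uW vW euv; rewrite !ffunE uW vW.
    by case: (I2 (g2 u)) => ->; case: (I2 (g2 v)) => ->; rewrite ?eqxx.
  - exact: mixed.
  - by rewrite eq_sym; apply: mixed.
  - by rewrite !g'out //; apply: pf'.
have r2 : rec2 f' g' l1 l2.
  split => // u.
    case: (boolP (u \in W)) => uW; first by rewrite -inW uW g'in.
    by rewrite g'out.
  by rewrite -inW => uW; rewrite g'out.
have g1 : cls g' l1 = col2 W g2 ord0.
  apply/setP => u; rewrite !inE; case: (boolP (u \in W)) => uW /=.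
    by rewrite ffunE uW; case: ifP => _; rewrite ?eqxx ?(negbTE l21).
  by rewrite g'out //; move: uW; rewrite inW negb_or => /andP[/negbTE -> _].
have g2E : cls g' l2 = col2 W g2 ord_max.
  apply/setP => u; rewrite !inE; case: (boolP (u \in W)) => uW /=.
    by rewrite ffunE uW; case: (I2 (g2 u)) => ->; rewrite ?eqxx ?(negbTE l12).
  by rewrite g'out //; move: uW; rewrite inW negb_or => /andP[_ /negbTE ->].
apply/memGs; exists g'.
  split => //; apply: (rt_trans _ _ _ f') => //.
  exact: (rec2_kempe e_sym pg' pf' r2).
rewrite (mon_split e g' l12) (rest_rec2 e r2) g1 g2E mu_E.
done.
Qed.


Lemma phi_gen p mu : @Jgen d e K p \/ @Mgen d e K p -> phi (p * 'X_[mu]) = 0.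
Proof.
case.
  move=> [W [f2 [g2 [pf [pg ->]]]]].
  rewrite !xf2 // mulrBl -!mpolyXD phiB !phiX.
  have -> : ((U_(rk e (col2 W f2 ord0)) + U_(rk e (col2 W f2 ord_max)) + mu)%MM \in Gs) =
            ((U_(rk e (col2 W g2 ord0)) + U_(rk e (col2 W g2 ord_max)) + mu)%MM \in Gs).
    by apply/idP/idP; apply: swapG.
  by rewrite subrr.
move=> [S [T [sS [sT [ne ->]]]]].
rewrite !xS_r // -!mpolyXD phiX.
case: (boolP (_ \in Gs)) => //; case/memGs => f' [pf' _] E.
rewrite /mon in E; have [l1 [l2 [l12 t1 t2 _]]] := mset E.
have c1 : cls f' l1 = S := rk_inj (stable_cls _ pf') sS t1.
have c2 : cls f' l2 = T := rk_inj (stable_cls _ pf') sT t2.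
case/set0Pn: ne => u; rewrite inE -c1 -c2 !inE => /andP[/eqP -> /eqP E'].
by rewrite E' eqxx in l12.
Qed.

Lemma phi_I p : I p -> phi p = 0.
Proof.
case=> s [H ->]; rewrite phi_sum big1_seq // => x /andP[_ xs].
rewrite [x.2]mpolyE mulr_sumr phi_sum big1 // => mu _.
by rewrite -scalerAr phiZ phi_gen ?mulr0 //; apply: H.
Qed.

End Phi.


Section Part2.
Variables (K : fieldType) (d k : nat) (e : rel 'I_d).
Hypothesis e_sym : forall u v, e u v = e v u.
Local Notation n := (nst e).
Local Notation I := (Kempe_ideal e K).
Variables (lt : rel 'X_{1..n}) (hlt : monomial_order lt).

Lemma part2 (g : {ffun 'I_d -> 'I_k}) : kproper e g ->
  exists2 f, good e g f & std_monomial lt I k (mon e f).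
Proof.
move=> pg; case: hlt => irr tr tot mulc wf.
have Gg : mon e g \in Gs e g by apply/memGs; exists g => //; split => //; apply: rt_refl.
have [m0 [m0G min]] : exists m0, m0 \in Gs e g /\ forall m', m' \in Gs e g -> ~~ lt m' m0.
  elim/(well_founded_induction wf): (mon e g) Gg => m IH mG.
  case: (boolP (has (fun m' => lt m' m) (Gs e g))) => [/hasP [m' m'G ltm] | /hasPn H].
    exact: IH m' ltm m'G.
  by exists m.
case/memGs: (m0G) => f0 gf0 m0E; exists f0 => //; split; first exact: mdeg_mon.
rewrite -m0E => -[s [Hs E]].
have : ('X_[m0] : {mpoly K[n]})@_m0 = 1 by rewrite mcoeffX eqxx.
rewrite E raddf_sum.
case: (boolP (has (fun x => (x.1 * x.2)@_m0 != 0) s)) => [/hasP [x xs nz] | /hasPn H]; last first.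
  rewrite big1_seq; first by move/eqP; rewrite eq_sym oner_eq0.
  move=> x /andP[_ xs].
  by apply/eqP; rewrite -[_ == 0]negbK; apply: H.
move=> _.
have [p [l [Ip [pnz [[lp lmax] x1]]]]] := Hs x xs.
rewrite x1 mulrC -mcoeff_msupp (perm_mem (msuppMX _ _)) in nz.
case/mapP: nz => mu _ m0l.
have Ip' : I (p * 'X_[mu]) by rewrite mulrC; apply: IMl.
have := @phi_I K d k e e_sym g _ Ip'.
rewrite /phi (bigD1_seq m0) ?uniq_Gs //= big1_seq => [|g' /andP[ne g'G]].
  rewrite addr0 m0l addmC mcoeffMX => E0; by move: lp; rewrite mcoeff_msupp E0 eqxx.
apply/eqP; rewrite mcoeff_eq0 (perm_mem (msuppMX _ _)); apply/negP => /mapP [m' m'p g'E].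
case: (eqVneq m' l) => [E'|ne'].
  by move: ne; rewrite g'E E' m0l addmC eqxx.
have := mulc _ _ mu (lmax _ m'p ne'); rewrite [(m' + mu)%MM]addmC -g'E -m0l => ltg.
by move: (min _ g'G); rewrite ltg.
Qed.

End Part2.


Section Gen.
Variables (n : nat) (K : fieldType) (lt : rel 'X_{1..n}) (J : {mpoly K[n]} -> Prop).

Lemma decomp (m : 'X_{1..n}) :
  exists s : seq 'I_n, size s = mdeg m /\ m = (\sum_(i <- s) U_(i))%MM.
Proof.
move: {2}(mdeg m) (erefl (mdeg m)) => N; elim: N m => [|N IH] m Hm.
  exists [::]; split => //; rewrite big_nil; apply/eqP; by rewrite -mdeg_eq0 Hm.
case: (pickP (fun i => m i != 0%N)) => [i /= mi|none]; last first.
  have m0 : m = 0%MM by apply/mnmP => i; rewrite mnm0E; apply/eqP; have := none i; rewrite /= => /negbFE.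
  by rewrite m0 mdeg0 in Hm.
have le : (U_(i) <= m)%MM by rewrite lep1mP.
have Em : m = (U_(i) + (m - U_(i)))%MM by rewrite addmC submK.
have dN : mdeg (m - U_(i)) = N by move: Hm; rewrite {1}Em mdegD mdeg1 add1n; case.
case: (IH _ dN) => s [sz Es]; exists (i :: s); split; first by rewrite /= sz dN Hm.
by rewrite big_cons -Es.
Qed.

Lemma X_neq0 (m : 'X_{1..n}) : 'X_[m] != 0 :> {mpoly K[n]}.
Proof.
apply/eqP => h; have := @mcoeffX n K m m; rewrite h mcoeff0 eqxx => /eqP.
by rewrite eq_sym oner_eq0.
Qed.

Lemma Xinj (a b : 'X_{1..n}) : 'X_[a] = 'X_[b] :> {mpoly K[n]} -> a = b.
Proof.
move=> h; have := @mcoeffX n K a a; rewrite h mcoeffX eqxx.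
case: eqP => // _ /eqP; by rewrite eq_sym oner_eq0.
Qed.

Lemma in_init p a : J p -> p != 0 -> is_lead lt p a -> initial_ideal lt J 'X_[a].
Proof.
move=> Jp pnz la; apply: Igen; by exists p, a.
Qed.

Lemma in_initX a : J 'X_[a] -> initial_ideal lt J 'X_[a].
Proof.
move=> Ja; apply: (in_init Ja (X_neq0 a)); split; first by rewrite msuppX mem_seq1.
by move=> m'; rewrite msuppX mem_seq1 => /eqP -> ; rewrite eqxx.
Qed.

Lemma lead2 (a b : 'X_{1..n}) : a != b -> lt b a ->
  ('X_[a] - 'X_[b] : {mpoly K[n]}) != 0 /\ is_lead lt ('X_[a] - 'X_[b] : {mpoly K[n]}) a.
Proof.
move=> ab ba.
have ain : a \in msupp ('X_[a] - 'X_[b] : {mpoly K[n]}).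
  rewrite mcoeff_msupp mcoeffB !mcoeffX eqxx (eq_sym b) (negbTE ab) subr0.
  exact: oner_neq0.
split.
  by apply: contraTneq ain => ->; rewrite msupp0.
split => // m'; rewrite mcoeff_msupp mcoeffB !mcoeffX => nz ne.
move: nz; rewrite (eq_sym a) (negbTE ne) sub0r oppr_eq0.
by case: (eqVneq b m') => [<- _|bm]; rewrite ?eqxx.
Qed.

End Gen.

Unset Implicit Arguments.

Theorem theorem1p2 (K : fieldType) (d k : nat) (e : rel 'I_d)
    (e_sym : forall u v, e u v = e v u) (e_irr : forall u, e u u = false) (hk : (0 < k)%N)
    (lt : rel 'X_{1..nst e}) (hlt : monomial_order lt) :
  let std := std_monomial lt (Kempe_ideal e K) k in
  (* every standard monomial of degree k is x_{S_1}...x_{S_k}, S_l pairwise disjoint stable *)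
  (forall m, std m ->
     exists S : 'I_k -> {set 'I_d},
       (forall l, stable e (S l)) /\
       (forall l l', l != l' -> [disjoint S l & S l']) /\
       'X_[m] = \prod_(l < k) xS e K (S l)) /\
  (* every k-Kempe class contains some f_i that is a k-coloring of G *)
  (forall g : {ffun 'I_d -> 'I_k}, proper_col e setT g ->
     exists (m : 'X_{1..nst e}) (f : {ffun 'I_d -> 'I_k}),
       std m /\ proper_col e setT f /\ 'X_[m] = xf e K setT f /\ kempe_equiv e g f) /\
  (* distinct f_i lie in distinct k-Kempe classes *)
  (forall (m m' : 'X_{1..nst e}) (f f' : {ffun 'I_d -> 'I_k}),
     std m -> std m' -> proper_col e setT f -> proper_col e setT f' ->
     'X_[m] = xf e K setT f -> 'X_[m'] = xf e K setT f' ->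
     kempe_equiv e f f' -> m = m').
Proof.
move=> std; rewrite {}/std.
have pc : forall f : {ffun 'I_d -> 'I_k}, proper_col e setT f <-> kproper e f.
  move=> f; split; first by move=> H u v; apply: H; rewrite in_setT.
  by move=> H u v _ _; apply: H.
split; [|split].
- move=> m [Hk Hni].
  have [s [sz Es]] := decomp m.
  have ts : size s == k by rewrite sz Hk.
  pose T : k.-tuple _ := Tuple ts.
  have Em : m = (\sum_(l < k) U_(tnth T l))%MM by rewrite Es (big_tuple _ _ T).
  have xSt : forall l, xS e K (val (enum_val (tnth T l))) = 'X_(tnth T l).
    by move=> l; rewrite xS_r ?(valP (enum_val _)) // /rk valKd enum_valK.
  exists (fun l => val (enum_val (tnth T l))).
  split; first by move=> l; exact: (valP (enum_val _)).
  split; last by rewrite Em -mprodXE; apply: eq_bigr => l _; rewrite xSt.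
  move=> l l' ll'; rewrite -setI_eq0; case: (boolP (_ :&: _ == set0)) => // ne.
  exfalso; apply: Hni.
  have l'l : l' != l by rewrite eq_sym.
  rewrite Em (bigD1 l) //= (bigD1 l') //= addmA addmC mpolyXD.
  apply: IMl; apply: in_initX; apply: Igen; right.
  exists (val (enum_val (tnth T l))), (val (enum_val (tnth T l'))).
  split; first exact: (valP (enum_val _)).
  split; first exact: (valP (enum_val _)).
  by split => //; rewrite mpolyXD !xSt.
- move=> g /pc pg.
  have [f [pf gf] Hstd] := @part2 K d k e e_sym lt hlt g pg.
  exists (mon e f), f; split => //; split; first exact/pc.
  by split => //; rewrite xf_mon.
- move=> m m' f f' [_ Hm] [_ Hm'] /pc pf /pc pf' Ef Ef' kf.
  rewrite xf_mon // in Ef; rewrite xf_mon // in Ef'.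
  have E1 := Xinj Ef; have E2 := Xinj Ef'; subst m m'.
  have [_ Id] := kempe_I K e_sym kf pf.
  case: (eqVneq (mon e f) (mon e f')) => // ne; exfalso.
  case: hlt => _ _ tot _ _.
  case/orP: (tot _ _ ne) => lt1.
    have ne' : mon e f' != mon e f by rewrite eq_sym.
    have [pnz pl] := lead2 K ne' lt1.
    apply: Hm'; apply: (in_init _ pnz pl); rewrite -opprB; exact: IN.
  have [pnz pl] := lead2 K ne lt1.
  by apply: Hm; apply: (in_init Id pnz pl).
Qed.
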